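(* Let $q=2^n$. For all $c\in{\mathbb F}_q$, $$\prod_{a\in\mathcal T_0}(c+a)+\prod_{b\in\mathcal T_1}(c+b)=c^{1/2}.$$
   Context: For $j\in\{0,1\}$, $\mathcal T_j=\{a\in{\mathbb F}_q^\times:\mathrm{Tr}_{{\mathbb F}_q/{\mathbb F}_2}(1/a)=j\}$. Here $c^{1/2}$ denotes the unique square root of $c$ in ${\mathbb F}_q$. *)

(* Defs.v *)
From HB Require Import structures.
From mathcomp Require Import all_boot all_order all_algebra all_field.
Set Implicit Arguments. Unset Strict Implicit. Unset Printing Implicit Defensive.
Import GRing.Theory.
Local Open Scope ring_scope.

Definition absTr (F : finFieldType) (n : nat) (x : F) : F :=
  \sum_(i < n) x ^+ (2 ^ i).

Definition Tset (F : finFieldType) (n : nat) (j : bool) : pred F :=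
  [pred a : F | (a != 0) && (absTr n a^-1 == (j : nat)%:R)].

(* Main.v *)
From HB Require Import structures.
Require Import Defs.
From mathcomp Require Import all_boot all_order all_algebra all_field.
From mathcomp Require Import zify.
From mathcomp Require Import ring.
Set Implicit Arguments. Unset Strict Implicit.
Import GRing.Theory.
Local Open Scope ring_scope.

Lemma sumXn_size (R : nzRingType) (k : nat) (f : nat -> nat) :
  (forall i, (i < k)%N -> (f i < f k)%N) ->
  let p := \sum_(i < k.+1) ('X^(f i) : {poly R}) in
  size p = (f k).+1 /\ lead_coef p = 1.
Proof.
move=> hf p.
have hq : (size (\sum_(i < k) ('X^(f i) : {poly R}))%R < size ('X^(f k) : {poly R}))%N.
  rewrite size_polyXn ltnS; apply: leq_trans (size_sum _ _ _) _.
  apply/bigmax_leqP_seq => i _ _; rewrite size_polyXn; exact: hf.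
rewrite /p big_ord_recr /= addrC; split.
  by rewrite size_addl // size_polyXn.
by rewrite lead_coefDl // lead_coefXn.
Qed.
Lemma ch2 (F : finFieldType) k (hq : #|F| = (2 ^ k.+1)%N) : (2%N \in [pchar F]).
Proof. exact: card_finPcharP hq _. Qed.

Lemma trsq (F : finFieldType) k (hq : #|F| = (2 ^ k.+1)%N) (x : F) :
  absTr k.+1 x ^+ 2 = absTr k.+1 x.
Proof.
rewrite /absTr -(pFrobenius_autE (ch2 hq)) rmorph_sum /=.
under eq_bigr do rewrite pFrobenius_autE -exprM -expnSr.
rewrite big_ord_recr /= -hq expf_card [RHS]big_ord_recl /= expn0 expr1 addrC.
done.
Qed.

Lemma tr01 (F : finFieldType) k (hq : #|F| = (2 ^ k.+1)%N) (x : F) :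
  absTr k.+1 x = 0 \/ absTr k.+1 x = 1.
Proof.
have h := trsq hq x.
have : absTr k.+1 x * (absTr k.+1 x - 1) == 0.
  by rewrite mulrBr mulr1 -expr2 h subrr.
rewrite mulf_eq0 subr_eq0 => /orP[/eqP|/eqP]; auto.
Qed.

Definition Q0 (F : finFieldType) k (x : F) := \sum_(i < k.+1) x ^+ (2 ^ i - 1).

Lemma Q0E (F : finFieldType) k (x : F) : x * Q0 k x = absTr k.+1 x.
Proof.
rewrite /Q0 mulr_sumr; apply: eq_bigr => i _.
by rewrite -exprS subn1 prednK // expn_gt0.
Qed.

Lemma tr0 (F : finFieldType) k : absTr k (0 : F) = 0.
Proof. by rewrite /absTr big1 // => i _; rewrite expr0n expn_eq0. Qed.

Lemma Q00 (F : finFieldType) k : Q0 k (0 : F) = 1.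
Proof.
rewrite /Q0 big_ord_recl /= big1 ?addr0 // => i _.
by rewrite expr0n /= subn_eq0 -(expn0 2) leq_exp2l.
Qed.

Lemma rootsprod (F : finFieldType) (p : {poly F}) (S : pred F) :
  size p = #|S|.+1 -> lead_coef p = 1 -> (forall y, S y -> p.[y] = 0) ->
  forall x, p.[x] = \prod_(y in S) (x - y).
Proof.
move=> hs hl hr x.
have hall : all (root p) (enum S).
  by apply/allP => y; rewrite mem_enum => Sy; apply/rootP; apply: hr.
have := @all_roots_prod_XsubC _ p (enum S); rewrite -cardE => /(_ hs hall).
rewrite uniq_rootsE enum_uniq => /(_ isT) ->.
by rewrite hl scale1r horner_prod big_enum /=; apply: eq_bigr => y _; rewrite hornerXsubC.
Qed.

Lemma rootsle (F : finFieldType) (p : {poly F}) (S : pred F) :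
  p != 0 -> (forall y, S y -> p.[y] = 0) -> (#|S| < size p)%N.
Proof.
move=> hp hr; rewrite cardE; apply: max_poly_roots => //; last exact: enum_uniq.
by apply/allP => y; rewrite mem_enum => Sy; apply/rootP; apply: hr.
Qed.

Definition TrP (F : finFieldType) k : {poly F} := \sum_(i < k.+1) 'X^(2 ^ i).
Definition Q0P (F : finFieldType) k : {poly F} := \sum_(i < k.+1) 'X^(2 ^ i - 1).

Lemma TrPE (F : finFieldType) k x : (TrP F k).[x] = absTr k.+1 x.
Proof. by rewrite /TrP horner_sum; apply: eq_bigr => i _; rewrite hornerXn. Qed.
Lemma Q0PE (F : finFieldType) k x : (Q0P F k).[x] = Q0 k x.
Proof. by rewrite /Q0P horner_sum; apply: eq_bigr => i _; rewrite hornerXn. Qed.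

Lemma TrP_size (F : finFieldType) k : size (TrP F k) = (2 ^ k).+1 /\ lead_coef (TrP F k) = 1.
Proof. by apply: (@sumXn_size F k (fun i => 2 ^ i)%N) => i hi; rewrite ltn_exp2l. Qed.

Lemma Q0P_size (F : finFieldType) k : size (Q0P F k) = (2 ^ k - 1).+1 /\ lead_coef (Q0P F k) = 1.
Proof.
apply: (@sumXn_size F k (fun i => 2 ^ i - 1)%N) => i hi.
have h1 : (2 ^ i < 2 ^ k)%N by rewrite ltn_exp2l.
have h2 : (0 < 2 ^ i)%N by rewrite expn_gt0.
lia.
Qed.

Lemma TrP1_size (F : finFieldType) k : size (TrP F k + 1) = (2 ^ k).+1 /\ lead_coef (TrP F k + 1) = 1.
Proof.
have [h1 h2] := TrP_size F k.
have hl : (size (1 : {poly F})%R < size (TrP F k))%N by rewrite size_poly1 h1 ltnS expn_gt0.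
by rewrite size_addl // lead_coefDl.
Qed.

Lemma cards (F : finFieldType) k (hq : #|F| = (2 ^ k.+1)%N) :
  #|[pred y : F | absTr k.+1 y == 0]| = (2 ^ k)%N /\
  #|[pred y : F | absTr k.+1 y == 1]| = (2 ^ k)%N.
Proof.
have [s1 l1] := TrP_size F k.
have [s2 l2] := TrP1_size F k.
have le0 : (#|[pred y : F | absTr k.+1 y == 0%R]| < (2 ^ k).+1)%N.
  rewrite -s1; apply: rootsle; first by rewrite -size_poly_eq0 s1.
  by move=> y /eqP /= h; rewrite TrPE.
have le1 : (#|[pred y : F | absTr k.+1 y == 1%R]| < (2 ^ k).+1)%N.
  rewrite -s2; apply: rootsle; first by rewrite -size_poly_eq0 s2.
  by move=> y /eqP /= h; rewrite hornerD hornerC TrPE h (addrr_pchar2 (ch2 hq)).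
have hs : (#|[pred y : F | absTr k.+1 y == 0%R]| + #|[pred y : F | absTr k.+1 y == 1%R]| = 2 ^ k.+1)%N.
  rewrite -hq -(cardC [pred y : F | absTr k.+1 y == 0]); congr (_ + _)%N.
  apply: eq_card => y; rewrite !inE.
  case: (tr01 hq y) => ->; rewrite ?eqxx ?oner_eq0 //.
  by rewrite eq_sym oner_eq0.
move: hs; rewrite expnS mul2n -addnn; lia.
Qed.

Lemma K0 (F : finFieldType) k (hq : #|F| = (2 ^ k.+1)%N) (x : F) :
  \prod_(y in [pred y : F | (y != 0) && (absTr k.+1 y == 0)]) (x + y) = Q0 k x.
Proof.
have [c0 _] := cards hq.
have [s l] := Q0P_size F k.
have hc : #|[pred y : F | (y != 0) && (absTr k.+1 y == 0)]| = (2 ^ k - 1)%N.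
  rewrite -c0 [in RHS](cardD1 0) inE /= tr0 eqxx add1n subn1 /=.
  by apply: eq_card => y; rewrite !inE.
rewrite -Q0PE (rootsprod (S := [pred y : F | (y != 0) && (absTr k.+1 y == 0)])) ?s ?hc //.
  by apply: eq_bigr => y _; rewrite (GRing.subr_pchar2 (ch2 hq)).
move=> y /andP [hy /eqP ht]; rewrite Q0PE; apply/eqP.
by move: (Q0E k y); rewrite ht => /eqP; rewrite mulf_eq0 (negbTE hy).
Qed.

Lemma K1 (F : finFieldType) k (hq : #|F| = (2 ^ k.+1)%N) (x : F) :
  \prod_(y in [pred y : F | absTr k.+1 y == 1]) (x + y) = absTr k.+1 x + 1.
Proof.
have [_ c1] := cards hq.
have [s l] := TrP1_size F k.
have -> : absTr k.+1 x + 1 = (TrP F k + 1).[x] by rewrite hornerD hornerC TrPE.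
rewrite (rootsprod (S := [pred y : F | absTr k.+1 y == 1])) ?s ?c1 //.
  by apply: eq_bigr => y _; rewrite (GRing.subr_pchar2 (ch2 hq)).
by move=> y /eqP /= h; rewrite hornerD hornerC TrPE h (addrr_pchar2 (ch2 hq)).
Qed.

Lemma prodinv (F : finFieldType) (S : pred F) (Q : F -> F) (c : F) :
  (forall y, S y -> y != 0) -> (forall x, \prod_(y in S) (x + y) = Q x) -> Q 0 = 1 ->
  \prod_(y in S) (c + y^-1) = if c == 0 then 1 else c ^+ #|S| * Q c^-1.
Proof.
move=> hS hQ h0.
have hp : \prod_(y in S) y = 1 by rewrite -[RHS]h0 -hQ; apply: eq_bigr => y _; rewrite add0r.
case: eqP => [->|/eqP hc].
  under eq_bigr do rewrite add0r.
  by rewrite prodfV hp invr1.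
rewrite (eq_bigr (fun y => (c * y^-1) * (c^-1 + y))); last first.
  move=> y Sy; have hy := hS y Sy; field; by apply/andP.
by rewrite big_split big_split /= prodr_const prodfV hp invr1 mulr1 hQ.
Qed.

Unset Implicit Arguments.
Theorem theorem7p8 (F : finFieldType) (n : nat) (hq : #|F| = (2 ^ n)%N)
  (c s : F) (hs : s ^+ 2 = c) :
  \prod_(a : F | a \in Tset n false) (c + a)
    + \prod_(b : F | b \in Tset n true) (c + b) = s.
Proof.
case: n hq => [|k] hq.
  have : (1 < #|F|)%N by apply/card_gt1P; exists 0, 1; rewrite !inE eq_sym oner_eq0.
  by rewrite hq.
have ch := ch2 hq.
rewrite (reindex_inj invr_inj) [X in _ + X](reindex_inj invr_inj) /=.
rewrite (eq_bigl [pred y : F | (y != 0) && (absTr k.+1 y == 0)]); last first.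
  by move=> y; rewrite !inE invr_eq0 invrK.
rewrite [X in _ + X](eq_bigl [pred y : F | absTr k.+1 y == 1]); last first.
  move=> y; rewrite !inE invr_eq0 invrK /=.
  by case: (eqVneq y 0) => [->|//]; rewrite tr0 eq_sym /= oner_eq0.
rewrite (prodinv (Q := Q0 k)) //; last first.
- exact: Q00.
- exact: K0.
- by move=> y /andP [].
rewrite (prodinv (Q := fun x => absTr k.+1 x + 1)) //; last first.
- by rewrite tr0 add0r.
- exact: K1.
- move=> y /=; apply: contraTneq => ->; rewrite tr0; apply/negP => /eqP h; move: (@oner_neq0 F); by rewrite -h eqxx.
have [c0 c1] := cards hq.
have hc' : #|[pred y : F | (y != 0) && (absTr k.+1 y == 0)]| = (2 ^ k - 1)%N.
  rewrite -c0 [in RHS](cardD1 0) inE /= tr0 eqxx add1n subn1 /=.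
  by apply: eq_card => y; rewrite !inE.
rewrite hc' c1.
have hcs : c ^+ (2 ^ k) = s.
  by rewrite -hs -exprM -expnS -hq expf_card.
case: eqP => [c00|/eqP hc].
  by rewrite (addrr_pchar2 ch); move: hs; rewrite c00 => /eqP; rewrite expf_eq0 => /andP [_ /eqP].
set e := (2 ^ k - 1)%N.
have he : (2 ^ k = e.+1)%N by rewrite /e subn1 prednK // expn_gt0.
rewrite -Q0E -hcs he exprS.
set Q := Q0 k c^-1; set ce := c ^+ e.
have -> : c * ce * (c^-1 * Q + 1) = ce * Q + c * ce by field.
by rewrite addrA (addrr_pchar2 ch) add0r.
Qed.
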